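(* Let $\sigma$ be any satisfaction function, i.e., any assignment that gives, for every participatory budgeting instance $I=\langle P,c,b\rangle$, a function $\sigma: 2^{P}\to\mathbb{R}_{\geq 0}$ that is inclusion-monotonic ($\sigma(Q)\geq\sigma(Q')$ whenever $Q'\subseteq Q\subseteq P$) and satisfies $\sigma(Q)=0$ if and only if $Q=\emptyset$. Then there exist a participatory budgeting instance $I=\langle P,c,b\rangle$ and a profile $\mathbf{A}=(A_1,\ldots,A_n)$ of approval ballots such that no feasible budget allocation $\pi\subseteq P$ with $c(\pi)\leq b$ satisfies strong extended justified representation for $\sigma$ (Strong-EJR$[\sigma]$).
   Context: A participatory budgeting instance is a triple $I=\langle P,c,b\rangle$ where $P$ is a finite set of projects, $c:P\to\mathbb{R}_{>0}$ is a cost function, and $b\in\mathbb{R}_{>0}$ is the budget limit, with $c(p)\leq b$ for all $p\in P$; for $Q\subseteq P$ write $c(Q)=\sum_{p\in Q}c(p)$. A feasible budget allocation is a set $\pi\subseteq P$ with $c(\pi)\leq b$. There is a set of voters $N=\{1,\ldots,n\}$; an approval ballot of voter $i$ is a function $A_i:P\to\{0,1\}$ ($A_i(p)=1$ means $i$ approves $p$), and a profile is $\mathbf{A}=(A_1,\ldots,A_n)$. For a satisfaction function $\sigma$, the satisfaction of voter $i$ for a set $Q\subseteq P$ is $\sigma_i(Q)=\sigma(\{p\in Q: A_i(p)=1\})$. For $Q\subseteq P$, a non-empty group of voters $S\subseteq N$ is $Q$-cohesive if every voter in $S$ approves every project in $Q$ and $\frac{|S|}{n}\cdot b\geq c(Q)$.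 A feasible budget allocation $\pi$ satisfies Strong-EJR$[\sigma]$ if for every $Q\subseteq P$ and every $Q$-cohesive group $S$, we have $\sigma_i(\pi)\geq\sigma_i(Q)$ for all $i\in S$. *)

(* Defs.v *)
From mathcomp Require Import all_boot all_order all_algebra.
Set Implicit Arguments. Unset Strict Implicit. Unset Printing Implicit Defensive.
Import Order.TTheory GRing.Theory Num.Theory.
Local Open Scope ring_scope.

Definition cost (R : realFieldType) (m : nat) (c : 'I_m -> R) (Q : {set 'I_m}) : R :=
  \sum_(p in Q) c p.

Definition pb_instance (R : realFieldType) (m : nat) (c : 'I_m -> R) (b : R) : Prop :=
  0 < b /\ forall p : 'I_m, 0 < c p /\ c p <= b.

Definition satisfaction_function (R : realFieldType)
  (sigma : forall m : nat, ('I_m -> R) -> R -> {set 'I_m} -> R) : Prop :=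
  forall (m : nat) (c : 'I_m -> R) (b : R), pb_instance c b ->
    (forall Q : {set 'I_m}, 0 <= sigma m c b Q) /\
    (forall Q Q' : {set 'I_m}, Q' \subset Q -> sigma m c b Q' <= sigma m c b Q) /\
    (forall Q : {set 'I_m}, sigma m c b Q = 0 <-> Q = set0).

Definition feasible (R : realFieldType) (m : nat) (c : 'I_m -> R) (b : R)
  (pi : {set 'I_m}) : Prop := cost c pi <= b.

(* A i = set of projects approved by voter i *)
Definition cohesive (R : realFieldType) (m n : nat) (c : 'I_m -> R) (b : R)
  (A : 'I_n -> {set 'I_m}) (Q : {set 'I_m}) (S : {set 'I_n}) : Prop :=
  S != set0 /\ (forall i, i \in S -> Q \subset A i) /\
  (#|S|%:R / n%:R) * b >= cost c Q.

(* sigma_i(Q) = sigma({p in Q : A_i(p) = 1}) *)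
Definition strong_EJR (R : realFieldType)
  (sigma : forall m : nat, ('I_m -> R) -> R -> {set 'I_m} -> R)
  (m n : nat) (c : 'I_m -> R) (b : R) (A : 'I_n -> {set 'I_m})
  (pi : {set 'I_m}) : Prop :=
  feasible c b pi /\
  forall (Q : {set 'I_m}) (S : {set 'I_n}), cohesive c b A Q S ->
    forall i, i \in S -> sigma m c b (Q :&: A i) <= sigma m c b (pi :&: A i).

(* Main.v *)
Require Import Defs.
From mathcomp Require Import all_boot all_order all_algebra.
Import Order.TTheory GRing.Theory Num.Theory.
Local Open Scope ring_scope.

Theorem mainTheorem1 (R : realFieldType)
  (sigma : forall m : nat, ('I_m -> R) -> R -> {set 'I_m} -> R) :
  satisfaction_function sigma ->
  exists (m : nat) (c : 'I_m -> R) (b : R) (n : nat) (A : 'I_n -> {set 'I_m}),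
    pb_instance c b /\ (0 < n)%N /\
    forall pi : {set 'I_m}, cost c pi <= b -> ~ strong_EJR sigma c b A pi.
Proof.
move=> Hsig.
pose c := fun _ : 'I_3 => (2 : R).
have Hpb : pb_instance c 3.
  by split => // p; split; rewrite /c ?ler_nat ?ltr_nat.
exists 3%N, c, 3, 3%N, (fun i : 'I_3 => [set k | k != i]).
split=> //; split=> // pi Hpi [_ HE].
have costE : forall Q : {set 'I_3}, cost c Q = (2 * #|Q|)%:R.
  by move=> Q; rewrite /cost /c sumr_const natrM mulr_natr.
have Hcard : (#|pi| <= 1)%N.
  rewrite costE ler_nat in Hpi; rewrite leqNgt; apply/negP => H.
  by have := leq_trans (leq_mul (leqnn 2) H) Hpi.
pose i : 'I_3 := if [pick k in pi] is Some k then k else ord0.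
have Hpi0 : pi :&: [set k | k != i] = set0.
  apply/setP => x; rewrite !inE; apply/negbTE/negP => /andP[xpi xi].
  move: xi; rewrite /i; case: pickP => [k kpi|/(_ x)]; last by rewrite xpi.
  by move/card_le1_eqP: Hcard => /(_ x k xpi kpi) ->; rewrite eqxx.
pose q : 'I_3 := if i == ord0 then inord 1 else ord0.
have qi : q != i.
  rewrite /q; case: (i =P ord0) => [Hi|/eqP]; last by rewrite eq_sym.
  rewrite Hi; apply/eqP => /(congr1 val).
  by rewrite /= inordK.
have Hcoh : cohesive c 3 (fun i : 'I_3 => [set k | k != i]) [set q] [set~ q].
  split; last split.
  - apply/set0Pn; exists i; by rewrite !inE eq_sym.
  - by move=> x; rewrite !inE => xq; rewrite sub1set inE eq_sym.
  - rewrite cardsC1 card_ord costE cards1 /=.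
    by rewrite mulrAC -mulrA divff ?mulr1 // pnatr_eq0.
have := HE _ _ Hcoh i; rewrite !inE eq_sym => /(_ qi).
rewrite Hpi0.
have [Hge [_ Hz]] := Hsig _ _ _ Hpb.
have -> : sigma 3%N c 3 set0 = 0 by apply/Hz.
move=> Hle.
have H0 : sigma 3%N c 3 ([set q] :&: [set k | k != i]) = 0.
  by apply/eqP; rewrite eq_le Hle Hge.
move/Hz: H0 => /setP /(_ q); by rewrite !inE eqxx qi.
Qed.
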